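(* For all integers $k,l\ge1$, $La^*([k]\times[l],\{\vee_2,\wedge_2\})=k+l-1$.
   Context: $[k]\times[l]$ is ordered coordinatewise. $\vee_2$ is the poset on three elements $a,b_1,b_2$ whose only relations are $a<b_1,a<b_2$; $\wedge_2$ is the poset on three elements $a,b_1,b_2$ whose only relations are $b_1<a,b_2<a$. For posets $P,R$, $P$ is a strong subposet of $R$ if there is an injection $i:P\to R$ with $p\le_P p'\iff i(p)\le_R i(p')$. A subset $F\subseteq Q$ is strong $\{\vee_2,\wedge_2\}$-free if neither $\vee_2$ nor $\wedge_2$ is a strong subposet of $F$ (induced order); $La^*(Q,\{\vee_2,\wedge_2\})$ is the maximum size of such a subset of $Q$. *)

(* Defs.v *)
From mathcomp Require Import all_boot.
Set Implicit Arguments. Unset Strict Implicit. Unset Printing Implicit Defensive.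

(* The grid poset [k] x [l], modelled on 'I_k * 'I_l (i.e. {0..k-1} x {0..l-1},
   order-isomorphic to {1..k} x {1..l}), ordered coordinatewise. *)
Definition grid_le (k l : nat) : rel ('I_k * 'I_l) :=
  fun p q => (p.1 <= q.1)%N && (p.2 <= q.2)%N.

(* V_2 on 'I_3: element 0 is a, elements 1,2 are b1,b2; only a < b1, a < b2. *)
Definition vee2_le : rel 'I_3 :=
  fun x y => (x == y) || ((val x == 0%N) && (val y != 0%N)).

(* Wedge_2 on 'I_3: element 0 is a, 1,2 are b1,b2; only b1 < a, b2 < a. *)
Definition wedge2_le : rel 'I_3 :=
  fun x y => (x == y) || ((val x != 0%N) && (val y == 0%N)).

Definition strong_subposet (P R : finType) (leP : rel P) (leR : rel R)
    (F : {set R}) : Prop :=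
  exists i : P -> R,
    [/\ injective i, (forall p, i p \in F) &
        (forall p p', leP p p' = leR (i p) (i p'))].

Definition vee_wedge_free (R : finType) (leR : rel R) (F : {set R}) : Prop :=
  ~ strong_subposet vee2_le leR F /\ ~ strong_subposet wedge2_le leR F.

(* Main.v *)
Require Import Defs.
From mathcomp Require Import all_boot.
From mathcomp Require Import zify.

Lemma grid_refl {k l} (x : 'I_k * 'I_l) : grid_le x x.
Proof. by rewrite /grid_le !leqnn. Qed.

Lemma grid_anti {k l} {x y : 'I_k * 'I_l} : grid_le x y -> grid_le y x -> x = y.
Proof.
case: x y => [x1 x2] [y1 y2]; rewrite /grid_le /= => /andP[h1 h2] /andP[h3 h4].
have e1 : x1 = y1 by apply: val_inj; apply/eqP; rewrite eqn_leq h1 h3.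
have e2 : x2 = y2 by apply: val_inj; apply/eqP; rewrite eqn_leq h2 h4.
by rewrite e1 e2.
Qed.

Lemma vee_contra k l (F : {set 'I_k * 'I_l}) a b c :
  ~ strong_subposet vee2_le (@grid_le k l) F ->
  a \in F -> b \in F -> c \in F -> a != b -> a != c ->
  grid_le a b -> grid_le a c -> ~~ grid_le b c -> ~~ grid_le c b -> False.
Proof.
move=> nS aF bF cF ab ac hab hac nbc ncb; apply: nS.
have bc : b != c by apply/eqP => e; move: nbc; rewrite e grid_refl.
have nba : ~~ grid_le b a by apply/negP => h; move: ab; rewrite (grid_anti hab h) eqxx.
have nca : ~~ grid_le c a by apply/negP => h; move: ac; rewrite (grid_anti hac h) eqxx.
exists (fun p : 'I_3 => if val p == 0 then a else if val p == 1 then b else c).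
split.
- move=> [[|[|[|?]]] hp] [[|[|[|?]]] hq] //= e; try exact: val_inj;
  move: e ab ac bc => ->; rewrite ?eqxx //.
- by move=> [[|[|[|?]]] hp].
- move=> [[|[|[|?]]] hp] [[|[|[|?]]] hq] //=;
  rewrite /vee2_le /= ?grid_refl ?(negbTE nba) ?(negbTE nca) ?(negbTE nbc)
    ?(negbTE ncb) ?hab ?hac //.
Qed.

Lemma key k l (F : {set 'I_k * 'I_l}) (x y z : 'I_k * 'I_l) :
  ~ strong_subposet vee2_le (@grid_le k l) F ->
  x \in F -> y \in F -> z \in F -> (z.1 : nat) = x.1 -> (x.2 < z.2)%N ->
  (x.1 < y.1)%N -> (x.2 : nat) = y.2 -> False.
Proof.
move=> nV xF yF zF e1 l2 l1 e2.
apply: (@vee_contra _ _ _ _ _ _ nV xF zF yF).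
- by apply/eqP => e; move: l2; rewrite e ltnn.
- by apply/eqP => e; move: l1; rewrite e ltnn.
- by rewrite /grid_le e1 leqnn ltnW.
- by rewrite /grid_le e2 leqnn ltnW.
- rewrite /grid_le negb_and; apply/orP; right; lia.
- rewrite /grid_le negb_and; apply/orP; left; lia.
Qed.

Lemma pair_eq k l (x y : 'I_k * 'I_l) : (x.1 : nat) = y.1 -> (x.2 : nat) = y.2 -> x = y.
Proof.
by case: x y => [x1 x2] [y1 y2] /= /ord_inj -> /ord_inj ->.
Qed.

Theorem theorem1p5 (k l : nat) (hk : (1 <= k)%N) (hl : (1 <= l)%N) :
  (exists F : {set 'I_k * 'I_l},
      vee_wedge_free (@grid_le k l) F /\ #|F| = (k + l - 1)%N) /\
  (forall F : {set 'I_k * 'I_l},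
      vee_wedge_free (@grid_le k l) F -> (#|F| <= k + l - 1)%N).
Proof.
case: k hk => // k' _; case: l hl => // l' _.
split.
- pose psi := fun t : 'I_(k'.+1 + l'.+1 - 1) =>
    ((inord (t - l') : 'I_k'.+1), (inord (minn t l') : 'I_l'.+1)).
  have tb (t : 'I_(k'.+1 + l'.+1 - 1)) : (t < k' + l'.+1)%N.
    by apply: leq_trans (ltn_ord t) _; rewrite addSn subn1.
  have v1 t : val (psi t).1 = (t - l')%N.
    by rewrite /= inordK //; have := tb t; lia.
  have v2 t : val (psi t).2 = minn t l'.
    by rewrite /= inordK // ltnS geq_minr.
  have mono (t t' : 'I_(k'.+1 + l'.+1 - 1)) : (t <= t')%N -> grid_le (psi t) (psi t').
    by move=> h; rewrite /grid_le !v1 !v2; apply/andP; split; lia.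
  have inj : injective psi.
    move=> t t' e; apply: ord_inj.
    have e1 := f_equal (fun x => val x.1) e; have e2 := f_equal (fun x => val x.2) e.
    rewrite /= !v1 in e1; rewrite /= !v2 in e2.
    lia.
  pose F := psi @: [set: 'I_(k'.+1 + l'.+1 - 1)].
  have comp x y : x \in F -> y \in F -> grid_le x y || grid_le y x.
    move=> /imsetP[t _ ->] /imsetP[t' _ ->].
    by case/orP: (leq_total t t') => h; [rewrite (mono _ _ h) | rewrite (mono _ _ h) orbT].
  exists F; split; last by rewrite card_imset // cardsT card_ord.
  split.
  - move=> [i [_ iF ile]].
    have h1 := ile (@Ordinal 3 1 isT) (@Ordinal 3 2 isT); have h2 := ile (@Ordinal 3 2 isT) (@Ordinal 3 1 isT).
    rewrite /vee2_le /= in h1 h2.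
    by move: (comp _ _ (iF (@Ordinal 3 1 isT)) (iF (@Ordinal 3 2 isT))); rewrite -h1 -h2.
  - move=> [i [_ iF ile]].
    have h1 := ile (@Ordinal 3 1 isT) (@Ordinal 3 2 isT); have h2 := ile (@Ordinal 3 2 isT) (@Ordinal 3 1 isT).
    rewrite /wedge2_le /= in h1 h2.
    by move: (comp _ _ (iF (@Ordinal 3 1 isT)) (iF (@Ordinal 3 2 isT))); rewrite -h1 -h2.
- move=> F [nV _].
  pose rowmax (x : 'I_k'.+1 * 'I_l'.+1) :=
    [forall y in F, (y.1 == x.1) ==> (y.2 <= x.2)%N].
  pose phi (x : 'I_k'.+1 * 'I_l'.+1) : 'I_k'.+1 + 'I_l'.+1 :=
    if rowmax x then inl x.1 else inr x.2.
  have wit x : ~~ rowmax x -> exists2 z, z \in F & ((z.1 : nat) = x.1) /\ (x.2 < z.2)%N.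
    rewrite negb_forall => /existsP[z]; rewrite negb_imply => /andP[zF].
    rewrite negb_imply -ltnNge => /andP[/eqP e lt].
    by exists z => //; rewrite e.
  have inj : {in F &, injective phi}.
    move=> x y xF yF; rewrite /phi.
    case rx: (rowmax x); case ry: (rowmax y) => // -[] e.
    + apply: pair_eq; first by rewrite e.
      move/forall_inP/(_ y yF): rx; move/forall_inP/(_ x xF): ry.
      rewrite e eqxx /= => h1 h2; lia.
    + have [zx zxF [ex ltx]] := wit x (negbT rx).
      have [zy zyF [ey lty]] := wit y (negbT ry).
      case: (ltngtP x.1 y.1) => h.
      * by case: (@key _ _ _ _ _ _ nV xF yF zxF ex ltx h); rewrite e.
      * by case: (@key _ _ _ _ _ _ nV yF xF zyF ey lty h); rewrite e.
      * by apply: pair_eq; rewrite ?h ?e.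
  have sub : phi @: F \subset ~: [set inr ord_max].
    apply/subsetP => u /imsetP[x xF ->]; rewrite !inE /phi.
    case rx: (rowmax x) => //; apply/negP => /eqP [e].
    have [z zF [_ lt]] := wit x (negbT rx).
    have := ltn_ord z.2; rewrite e /= in lt; by rewrite ltnS leqNgt lt.
  have <- := card_in_imset inj; apply: leq_trans (subset_leq_card sub) _.
  by rewrite cardsC1 card_sum !card_ord subn1.
Qed.
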